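(* Let $\lambda$ be a nonempty partition. (1) For every integer $k\geq 2$, \[ \frac{s_\lambda(1^k)}{k}\geq \frac{s_\lambda(1^{k-1})}{k-1}. \] (2) If moreover $2\leq \ell(\lambda)\leq k-1$, then \[ \frac{s_\lambda(1^k)}{k}\geq \frac{s_\lambda(1^{k-1})}{k-1}+\frac{1}{k}. \]
   Context: $s_\lambda$ is the Schur polynomial of $\lambda$, and $s_\lambda(1^m)$ denotes its evaluation at $(1,\dots,1)$ with $m$ ones; equivalently, $s_\lambda(1^m)$ is the number of semistandard Young tableaux of shape $\lambda$ with entries in $\{1,\dots,m\}$ (rows weakly increasing left to right, columns strictly increasing top to bottom). $\ell(\lambda)$ is the number of nonzero parts of $\lambda$. *)

(* Defs.v *)
From mathcomp Require Import all_boot all_order all_algebra.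
Set Implicit Arguments. Unset Strict Implicit. Unset Printing Implicit Defensive.

Definition is_partition (la : seq nat) : bool :=
  sorted geq la && all (fun p => 0 < p) la.

Definition plength (la : seq nat) : nat := size la.

(* a filling of the bounding box 'I_(size la) x 'I_(head la) with
   optional entries in {0,..,m-1} (standing for {1,..,m}) *)
Definition filling (la : seq nat) (m : nat) :=
  {ffun 'I_(size la) * 'I_(head 0 la) -> option 'I_m}.

Definition in_shape (la : seq nat) (i j : nat) : bool := j < nth 0 la i.

Definition entry m (o : option 'I_m) : nat := if o is Some x then x else 0.

Definition is_ssyt (la : seq nat) (m : nat) (T : filling la m) : bool :=
  [forall c : 'I_(size la) * 'I_(head 0 la),
     in_shape la c.1 c.2 == (T c != None)]
  && [forall i : 'I_(size la), forall j : 'I_(head 0 la), forall j' : 'I_(head 0 la),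
       (j < j') && in_shape la i j' ==> (entry (T (i, j)) <= entry (T (i, j')))]
  && [forall i : 'I_(size la), forall i' : 'I_(size la), forall j : 'I_(head 0 la),
       (i < i') && in_shape la i' j ==> (entry (T (i, j)) < entry (T (i', j)))].

(* s_la(1^m) = number of SSYT of shape la with entries in {1..m} *)
Definition schur_ones (la : seq nat) (m : nat) : nat :=
  #|[pred T : filling la m | is_ssyt T]|.

(* Main.v *)
Require Import Defs.
From mathcomp Require Import all_boot all_order all_algebra.
From mathcomp Require Import zify ring lra.
Import Order.TTheory GRing.Theory Num.Theory.
Set Implicit Arguments. Unset Strict Implicit. Unset Printing Implicit Defensive.

Lemma ssyt_transport (la : seq nat) m m' (T : filling la m) (U : filling la m') :
  (forall c, (U c != None) = (T c != None)) ->
  (forall c c', T c' != None ->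
     (entry (T c) <= entry (T c') -> entry (U c) <= entry (U c'))%N /\
     (entry (T c) < entry (T c') -> entry (U c) < entry (U c'))%N) ->
  is_ssyt T -> is_ssyt U.
Proof.
move=> HN HE /andP[/andP[/forallP H1 /forallP H2] /forallP H3].
apply/andP; split; first (apply/andP; split).
- by apply/forallP => c; rewrite HN; exact: H1.
- apply/forallP => i; apply/forallP => j; apply/forallP => j'; apply/implyP => /andP[ljj' ins].
  have /forallP/(_ j)/forallP/(_ j')/implyP := H2 i.
  move=> /(_ (introT andP (conj ljj' ins))) le.
  have hn : T (i, j') != None by rewrite -(eqP (H1 (i, j'))).
  exact: (HE _ _ hn).1 le.
- apply/forallP => i; apply/forallP => i'; apply/forallP => j; apply/implyP => /andP[lii' ins].
  have /forallP/(_ i')/forallP/(_ j)/implyP := H3 i.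
  move=> /(_ (introT andP (conj lii' ins))) le.
  have hn : T (i', j) != None by rewrite -(eqP (H1 (i', j))).
  exact: (HE _ _ hn).2 le.
Qed.

Definition widenF la n (T : filling la n) : filling la n.+1 :=
  [ffun c => omap (widen_ord (leqnSn n)) (T c)].

Definition hmap n (m : nat) (x : 'I_n.+1) : 'I_n.+2 :=
  if val x == m then ord_max else widen_ord (leqnSn _) x.

Definition liftF la n (m : nat) (T : filling la n.+1) : filling la n.+2 :=
  [ffun c => omap (@hmap n m) (T c)].

Definition maxE la n (T : filling la n) : nat := \max_c entry (T c).

Definition usesTop la n (T : filling la n.+1) : bool := [exists c, T c == Some ord_max].

Lemma entry_lt n (o : option 'I_n.+1) : (entry o <= n)%N.
Proof. by case: o => [x|] //=; rewrite -ltnS. Qed.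

Lemma maxE_le la n (T : filling la n.+1) : (maxE T <= n)%N.
Proof. by apply/bigmax_leqP => c _; apply: entry_lt. Qed.

Lemma hmap_inj n m : injective (@hmap n m).
Proof.
move=> x y; rewrite /hmap.
case: eqP => hx; case: eqP => hy => h.
- by apply: val_inj; rewrite /= hx hy.
- have := congr1 val h => /= ey. have := ltn_ord y. lia.
- have := congr1 val h => /= ey. have := ltn_ord x. lia.
- by apply: val_inj; have := congr1 val h.
Qed.

Lemma omap_inj (A B : Type) (f : A -> B) : injective f -> injective (omap f).
Proof. by move=> fi [x|] [y|] //= [] /fi ->. Qed.

Lemma widenF_inj la n : injective (@widenF la n).
Proof.
move=> T1 T2 h; apply/ffunP => c.
have := congr1 (fun T : filling la n.+1 => T c) h; rewrite !ffunE; apply: omap_inj.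
by move=> x y /(congr1 val) /= /val_inj.
Qed.

Lemma widenF_ssyt la n (T : filling la n) : is_ssyt T -> is_ssyt (widenF T).
Proof.
apply: ssyt_transport => [c|c c' _]; rewrite !ffunE; first by case: (T c).
by case: (T c) => [x|]; case: (T c') => [y|].
Qed.

Lemma widenF_noTop la n (T : filling la n.+1) : ~~ usesTop (widenF T).
Proof.
apply/existsP => -[c]; rewrite ffunE; case: (T c) => [x|] //= /eqP [] e.
by have := ltn_ord x; rewrite e ltnn.
Qed.

Lemma ssyt_shape la m (T : filling la m) c :
  is_ssyt T -> (T c != None) = in_shape la c.1 c.2.
Proof. by case/andP=> [/andP[/forallP H1 _] _]; rewrite (eqP (H1 c)). Qed.

Lemma entry_le_max la n (T : filling la n) c : (entry (T c) <= maxE T)%N.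
Proof. rewrite /maxE; exact: leq_bigmax. Qed.

Lemma liftF_entry la n m (T : filling la n.+1) c :
  entry (liftF m T c) = if T c is Some x then (if val x == m then n.+1 else val x) else 0%N.
Proof. by rewrite ffunE; case: (T c) => [x|] //=; rewrite /hmap; case: eqP. Qed.

Lemma liftF_ssyt la n (T : filling la n.+1) : is_ssyt T -> is_ssyt (liftF (maxE T) T).
Proof.
apply: ssyt_transport => [c|c c']; first by rewrite ffunE; case: (T c).
rewrite !liftF_entry.
have := entry_le_max T c; have := entry_le_max T c'; have := maxE_le T.
case: (T c) => [x|]; case: (T c') => [y|] //= h1 h2 h3 _.
- by split; case: eqP; case: eqP; lia.
- by split=> // h; case: eqP; lia.
Qed.

Lemma liftF_top la n (T : filling la n.+1) (c00 : 'I_(size la) * 'I_(head 0 la)) :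
  is_ssyt T -> in_shape la c00.1 c00.2 -> usesTop (liftF (maxE T) T).
Proof.
move=> sT ins.
have cp : (0 < #|{: 'I_(size la) * 'I_(head 0 la)}|)%N by apply/card_gt0P; exists c00.
have [c0 e] := @bigop.eq_bigmax _ (fun c => entry (T c)) cp.
have hn := ssyt_shape c00 sT; rewrite ins in hn.
apply/existsP.
case E: (T c0) => [x|].
  exists c0; rewrite ffunE E /= /hmap; move: e; rewrite /maxE E /= => ->; by rewrite eqxx.
exists c00; rewrite ffunE.
have := entry_le_max T c00; move: e; rewrite /maxE E /= => ->.
case: (T c00) hn => [y|] //= _; rewrite leqn0 /hmap => /eqP ey. have -> : (\val y == 0) = true by apply/eqP. by [].
Qed.

Definition gmap la n (T : filling la n.+1) : 'I_n.+1 * filling la n.+2 :=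
  (inord (maxE T), liftF (maxE T) T).

Lemma gmap_inj la n : injective (@gmap la n).
Proof.
move=> T1 T2 [e1 e2].
have em : maxE T1 = maxE T2.
  by have := congr1 (@nat_of_ord _) e1; rewrite !inordK // ltnS maxE_le.
rewrite em in e2; apply/ffunP => c.
have := congr1 (fun T : filling la n.+2 => T c) e2; rewrite !ffunE.
apply: omap_inj; exact: hmap_inj.
Qed.

Definition Tstar la n : filling la n.+2 :=
  [ffun c : 'I_(size la) * 'I_(head 0 la) => if in_shape la c.1 c.2 then Some (inord (c.1 + n.+2 - size la)) else None].

Lemma Tstar_entry la n c : (size la <= n.+2)%N ->
  entry (Tstar la n c) = if in_shape la c.1 c.2 then (c.1 + n.+2 - size la)%N else 0%N.
Proof.
move=> hs; rewrite ffunE; case: ifP => //= _; rewrite inordK //.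
case: c => [i j] /=; have := ltn_ord i; lia.
Qed.

Lemma Tstar_ssyt la n : (size la <= n.+1)%N -> is_ssyt (Tstar la n).
Proof.
move=> hs; apply/andP; split; first (apply/andP; split).
- by apply/forallP => c; rewrite ffunE; case: ifP.
- apply/forallP => i; apply/forallP => j; apply/forallP => j'; apply/implyP => /andP[ljj' ins].
  rewrite !Tstar_entry ?(leq_trans hs) //= ins.
  have -> : in_shape la i j by rewrite /in_shape; move: ins; rewrite /in_shape; lia.
  by [].
- apply/forallP => i; apply/forallP => i'; apply/forallP => j; apply/implyP => /andP[lii' ins].
  rewrite !Tstar_entry ?(leq_trans hs) //= ins.
  have := ltn_ord i'; case: ifP => _; lia.
Qed.

Lemma nth_pos la i : all (fun p => 0 < p)%N la -> (i < size la)%N -> (0 < nth 0 la i)%N.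
Proof. by move=> /allP H hi; apply: H; apply: mem_nth. Qed.

Lemma Tstar_top la n (hh : (0 < head 0 la)%N) (hs0 : (0 < size la)%N) :
  all (fun p => 0 < p)%N la -> (size la <= n.+1)%N -> usesTop (Tstar la n).
Proof.
move=> ha hs; apply/existsP.
have hi : ((size la).-1 < size la)%N by lia.
exists (Ordinal hi, Ordinal hh); rewrite ffunE /= /in_shape nth_pos //.
apply/eqP; congr Some; apply: val_inj; rewrite /= inordK; lia.
Qed.

Lemma Tstar_miss la n (hh : (0 < head 0 la)%N) (T : filling la n.+1) :
  all (fun p => 0 < p)%N la -> (2 <= size la <= n.+1)%N ->
  liftF (maxE T) T != Tstar la n.
Proof.
move=> ha /andP[hs2 hs]; apply/eqP => E.
have hi : ((size la).-2 < size la)%N by lia.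
have := congr1 (fun U : filling la n.+2 => entry (U (Ordinal hi, Ordinal hh))) E.
rewrite liftF_entry Tstar_entry ?(leq_trans hs) //= /in_shape nth_pos //.
have := entry_le_max T (Ordinal hi, Ordinal hh); have := maxE_le T.
case: (T _) => [x|] /=; last lia.
case: eqP; lia.
Qed.

Lemma counts la n : is_partition la -> la != [::] ->
  exists bl bt,
    [/\ schur_ones la n.+2 = (bl + bt)%N, (schur_ones la n.+1 <= bl)%N,
        (schur_ones la n.+1 <= n.+1 * bt)%N &
        ((2 <= size la <= n.+1)%N -> (schur_ones la n.+1 + n.+1 <= n.+1 * bt)%N)].
Proof.
case/andP=> _ ha hne.
have hs0 : (0 < size la)%N by case: la hne {ha}.
have hh : (0 < head 0 la)%N by by case: la hne ha {hs0} => //= a l _ /andP[].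
pose A := [set T : filling la n.+1 | is_ssyt T].
pose B := [set T : filling la n.+2 | is_ssyt T].
pose U := [set T : filling la n.+2 | usesTop T].
have eA : schur_ones la n.+1 = #|A| by apply: eq_card => T; rewrite !inE.
have eB : schur_ones la n.+2 = #|B| by apply: eq_card => T; rewrite !inE.
exists #|B :\: U|, #|B :&: U|.
have c00ins : in_shape la 0 0 by exact: nth_pos.
split.
- by rewrite eB -(cardsID U B) addnC.
- rewrite eA -(card_imset _ (@widenF_inj la n.+1)); apply: subset_leq_card.
  apply/subsetP => x /imsetP[T]; rewrite !inE => sT ->.
  by rewrite widenF_noTop widenF_ssyt.
- rewrite eA -(card_imset _ (@gmap_inj la n)).
  have -> : (n.+1 * #|B :&: U|)%N = #|setX [set: 'I_n.+1] (B :&: U)| by rewrite cardsX cardsT card_ord.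
  apply: subset_leq_card; apply/subsetP => x /imsetP[T]; rewrite !inE => sT ->.
  by rewrite /= liftF_ssyt // (@liftF_top _ _ _ (Ordinal hs0, Ordinal hh) sT c00ins).
- move=> hsz.
  have hsz' : (size la <= n.+1)%N by case/andP: hsz.
  have tin : Tstar la n \in B :&: U by rewrite !inE Tstar_ssyt // Tstar_top.
  rewrite (cardsD1 (Tstar la n) (B :&: U)) tin mulnDr muln1 addnC leq_add2l.
  rewrite eA -(card_imset _ (@gmap_inj la n)).
  have -> : (n.+1 * #|B :&: U :\ Tstar la n|)%N = #|setX [set: 'I_n.+1] (B :&: U :\ Tstar la n)| by rewrite cardsX cardsT card_ord.
  apply: subset_leq_card; apply/subsetP => x /imsetP[T]; rewrite !inE => sT ->.
  by rewrite /= Tstar_miss // liftF_ssyt // (@liftF_top _ _ _ (Ordinal hs0, Ordinal hh) sT c00ins).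
Qed.

Local Open Scope ring_scope.

Theorem lemma4p1 (la : seq nat) :
  is_partition la -> la != [::] ->
  (forall k : nat, (2 <= k)%N ->
     (schur_ones la k)%:R / k%:R >= (schur_ones la k.-1)%:R / (k.-1)%:R :> rat)
  /\
  (forall k : nat, (2 <= k)%N -> (2 <= plength la <= k.-1)%N ->
     (schur_ones la k)%:R / k%:R >=
       (schur_ones la k.-1)%:R / (k.-1)%:R + 1 / k%:R :> rat).
Proof.
move=> hp hne; split => -[|[|n]] // _ => [|hl];
  have [bl [bt [eB hA1 hA2 hA3]]] := counts n hp hne; rewrite /=.
- have h : ((n.+2 * schur_ones la n.+1) <= (n.+1 * schur_ones la n.+2))%N by rewrite eB; nia.
  move: h; rewrite -(ler_nat rat) !natrM.
  move: (schur_ones la n.+1) (schur_ones la n.+2) => a b h.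
  rewrite -subr_ge0.
  have -> : b%:R / n.+2%:R - a%:R / n.+1%:R =
     (n.+1%:R * b%:R - n.+2%:R * a%:R) / (n.+1%:R * n.+2%:R) :> rat.
    by field; apply/andP; split; apply/eqP; have := ler0n rat n; lra.
  by apply: divr_ge0; rewrite ?subr_ge0 // mulr_ge0.
- have h : ((n.+2 * schur_ones la n.+1 + n.+1) <= (n.+1 * schur_ones la n.+2))%N.
    by have := hA3 hl; rewrite eB; nia.
  move: h; rewrite -(ler_nat rat) natrD !natrM.
  move: (schur_ones la n.+1) (schur_ones la n.+2) => a b h.
  rewrite -subr_ge0.
  have -> : b%:R / n.+2%:R - (a%:R / n.+1%:R + 1 / n.+2%:R) =
     (n.+1%:R * b%:R - (n.+2%:R * a%:R + n.+1%:R)) / (n.+1%:R * n.+2%:R) :> rat.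
    by field; apply/andP; split; apply/eqP; have := ler0n rat n; lra.
  by apply: divr_ge0; rewrite ?subr_ge0 // mulr_ge0.
Qed.
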